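(* Let $\Sigma=\mathbb{S}^{n-1}\times\mathbb{R}\subset\mathbb{R}^{n+1}$ be a self-shrinker, with $x_n$ the coordinate on the $\mathbb{R}$ factor. For each $a\in[0,\sqrt2)$, the region $\{x_n>a\}\subset\Sigma$ is unstable. Moreover, for each such $a$ there exists $b_a>a$ such that the region $\{a<x_n<b\}\subset\Sigma$ is unstable for every $b>b_a$.
   Context: $\mathbb{S}^{n-1}$ is the round sphere of radius $\sqrt{2(n-1)}$ centered at the origin of $\mathbb{R}^n$. Stability operator: $Lf=\Delta f-\tfrac12\langle\vec x,\nabla f\rangle+(|A|^2+\tfrac12)f$. A region $\Omega$ is stable if there exists a function $u$ with $Lu=0$ and $u>0$ on $\Omega$; it is unstable otherwise. For a bounded region, instability means $L$ has a negative Dirichlet eigenvalue there (eigenvalue convention $Lu=-\lambda u$). *)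

(* Defs.v *)
From Stdlib Require Import Reals Lra Arith.
Open Scope R_scope.

(* Points of R^{n+1} are represented as functions  x : nat -> R  with
   coordinates x 0, ..., x n ; coordinates of index > n are required to be 0
   (predicate [valid]).  The cylinder is
     Sigma = S^{n-1} x R,  S^{n-1} = sphere of radius sqrt(2(n-1)) in the
   coordinates x 0 .. x (n-1), and x n is the coordinate on the R factor. *)

Fixpoint rsum (N : nat) (f : nat -> R) : R :=
  match N with
  | O => 0
  | S k => rsum k f + f k
  end.

Definition valid (N : nat) (x : nat -> R) : Prop :=
  forall i, (N <= i)%nat -> x i = 0.

Definition dist (N : nat) (x z : nat -> R) : R :=
  sqrt (rsum N (fun i => (x i - z i) ^ 2)).

Definition rad (n : nat) : R := sqrt (2 * (INR n - 1)).

Definition on_cyl (n : nat) (x : nat -> R) : Prop :=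
  valid (S n) x /\ rsum n (fun i => x i ^ 2) = rad n ^ 2.

Definition upd (x : nat -> R) (i : nat) (s : R) : nat -> R :=
  fun j => if Nat.eqb j i then s else x j.

Definition has_partial (F : (nat -> R) -> R) (i : nat)
    (G : (nat -> R) -> R) (x : nat -> R) : Prop :=
  derivable_pt_lim (fun s => F (upd x i s)) (x i) (G x).

Definition cont_at (N : nat) (G : (nat -> R) -> R) (z : nat -> R) : Prop :=
  forall eps, 0 < eps -> exists d, 0 < d /\
    forall w, valid N w -> dist N w z < d -> Rabs (G w - G z) < eps.

Definition C2_ball (N : nat) (F : (nat -> R) -> R)
    (G : nat -> (nat -> R) -> R) (H : nat -> nat -> (nat -> R) -> R)
    (x : nat -> R) (r : R) : Prop :=
  0 < r /\
  forall z, valid N z -> dist N z x < r ->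
    forall i j, (i < N)%nat -> (j < N)%nat ->
      has_partial F i (G i) z /\ has_partial (G i) j (H i j) z /\
      cont_at N (H i j) z.

(* Extension of a function u on Sigma to a neighbourhood of Sigma in R^{n+1},
   homogeneous of degree 0 in the sphere variables:
     hext u (y, t) = u (rad * y / |y| , t).
   Only the values of u on Sigma matter. *)
Definition hext (n : nat) (u : (nat -> R) -> R) : (nat -> R) -> R :=
  fun x => u (fun i =>
     if Nat.ltb i n then rad n * x i / sqrt (rsum n (fun k => x k ^ 2))
     else if Nat.eqb i n then x n else 0).

(* Squared norm of the second fundamental form of Sigma:
   n-1 principal curvatures equal to 1/rad, so |A|^2 = (n-1)/(2(n-1)) = 1/2. *)
Definition cylA2 : R := / 2.

(* The stability operator  L f = Delta f - 1/2 <x, grad f> + (|A|^2 + 1/2) f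
   on Sigma, evaluated at a point x of Sigma, for f = u|Sigma, computed from the
   degree-0-homogeneous extension F = hext n u (with partials G, H):
   at points of Sigma, Delta_Sigma u = sum_{i<=n} d_i d_i F  and
   grad_Sigma u = grad F (F is 0-homogeneous in the sphere variables). *)
Definition Lop (n : nat) (F : (nat -> R) -> R)
    (G : nat -> (nat -> R) -> R) (H : nat -> nat -> (nat -> R) -> R)
    (x : nat -> R) : R :=
  rsum (S n) (fun i => H i i x)
  - / 2 * rsum (S n) (fun i => x i * G i x)
  + (cylA2 + / 2) * F x.

(* A region of Sigma is given by an (open) predicate on R^{n+1}; the region is
   its intersection with Sigma. *)
Definition stable (n : nat) (Omega : (nat -> R) -> Prop) : Prop :=
  exists u : (nat -> R) -> R,
    forall x, on_cyl n x -> Omega x ->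
      exists G H r,
        C2_ball (S n) (hext n u) G H x r /\
        Lop n (hext n u) G H x = 0 /\
        0 < u x.

Definition unstable (n : nat) (Omega : (nat -> R) -> Prop) : Prop :=
  ~ stable n Omega.

(* Main.v *)
Require Import Defs.
From Stdlib Require Import Reals Lra Lia Psatz ClassicalEpsilon FunctionalExtensionality Classical.
From Coquelicot Require Import Coquelicot.
Import Defs.
Open Scope R_scope.

Lemma min2 (h k : R -> R) (p d L : R) : 0 < d ->
  (forall s, Rabs (s - p) < d -> h p <= h s) ->
  (forall s, Rabs (s - p) < d -> derivable_pt_lim h s (k s)) ->
  derivable_pt_lim k p L -> k p = 0 /\ 0 <= L.
Proof.
  intros Hd Hmin Hder HL.
  assert (Hkp : k p = 0).
  { assert (pr : derivable_pt h p).
    { exists (k p). apply Hder. rewrite Rminus_diag, Rabs_R0; lra. }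
    rewrite <- (derive_pt_eq_0 h p (k p) pr (Hder p ltac:(rewrite Rminus_diag, Rabs_R0; lra))).
    apply (deriv_minimum h (p - d) (p + d) p pr); try lra.
    intros x H1 H2. apply Hmin. apply Rabs_def1; lra. }
  split; [exact Hkp|].
  destruct (Rle_or_lt 0 L) as [HL0|HL0]; [exact HL0|exfalso].
  destruct (HL (- L / 2) ltac:(lra)) as [del Hdel].
  set (h0 := Rmin del d / 2).
  assert (Hm0 : 0 < Rmin del d) by (pose proof (cond_pos del); unfold Rmin; destruct Rle_dec; lra).
  assert (Hh0 : 0 < h0) by (unfold h0; lra).
  assert (Hh0d : h0 < d) by (unfold h0; pose proof (Rmin_r del d); lra).
  assert (Hh0del : h0 < del) by (unfold h0; pose proof (Rmin_l del d); lra).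
  destruct (MVT_cor2 h k p (p + h0) ltac:(lra)) as [c [Hc1 Hc2]].
  { intros c Hc. apply Hder. apply Rabs_def1; lra. }
  assert (Hkc : k c < 0).
  { assert (Hx := Hdel (c - p) ltac:(apply Rgt_not_eq; lra) ltac:(rewrite Rabs_right; simpl; lra)).
    replace (p + (c - p)) with c in Hx by ring. rewrite Hkp, Rminus_0_r in Hx.
    apply Rabs_def2 in Hx. destruct Hx as [Hx _].
    set (q := k c / (c - p)) in *. assert (q < 0) by lra.
    destruct (Rle_or_lt 0 (k c)) as [Hk|Hk]; [|exact Hk].
    exfalso. assert (0 <= q). { unfold q, Rdiv. apply Rmult_le_pos; [lra|]. left; apply Rinv_0_lt_compat; lra. } lra. }
  assert (Hm := Hmin (p + h0) ltac:(apply Rabs_def1; lra)).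
  assert (k c * (p + h0 - p) < 0) by (apply Rmult_neg_pos; lra). lra.
Qed.

Lemma rsum_ext N f g : (forall i, (i < N)%nat -> f i = g i) -> rsum N f = rsum N g.
Proof. induction N; intros H; simpl; [reflexivity|]. rewrite IHN by (intros; apply H; lia). rewrite H by lia. reflexivity. Qed.

Lemma rsum_nonneg N f : (forall i, (i < N)%nat -> 0 <= f i) -> 0 <= rsum N f.
Proof. induction N; intros H; simpl; [lra|]. pose proof (H N ltac:(lia)). pose proof (IHN ltac:(intros; apply H; lia)). lra. Qed.

Lemma rsum_le N f g : (forall i, (i < N)%nat -> f i <= g i) -> rsum N f <= rsum N g.
Proof. induction N; intros H; simpl; [lra|]. pose proof (H N ltac:(lia)). pose proof (IHN ltac:(intros; apply H; lia)). lra. Qed.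

Lemma rsum_single N f i : (i < N)%nat -> (forall j, (j < N)%nat -> 0 <= f j) -> f i <= rsum N f.
Proof.
  induction N; intros Hi H; simpl; [lia|].
  destruct (Nat.eq_dec i N) as [->|Hne].
  - pose proof (rsum_nonneg N f ltac:(intros; apply H; lia)). lra.
  - pose proof (IHN ltac:(lia) ltac:(intros; apply H; lia)). pose proof (H N ltac:(lia)). lra.
Qed.

Lemma rsum_scal N k f : rsum N (fun i => k * f i) = k * rsum N f.
Proof. induction N; simpl; [ring|]. rewrite IHN; ring. Qed.

Lemma rsum_plus N f g : rsum N (fun i => f i + g i) = rsum N f + rsum N g.
Proof. induction N; simpl; [ring|]. rewrite IHN; ring. Qed.

Lemma rsum_zero N f : (forall i, (i < N)%nat -> f i = 0) -> rsum N f = 0.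
Proof. intros H. rewrite (rsum_ext N f (fun _ => 0)) by exact H. clear. induction N; simpl; [ring|]. rewrite IHN; ring. Qed.

Lemma rsum_change N f g i : (i < N)%nat -> (forall j, (j < N)%nat -> j <> i -> g j = f j) ->
  rsum N g = rsum N f - f i + g i.
Proof.
  induction N; intros Hi H; simpl; [lia|].
  destruct (Nat.eq_dec i N) as [->|Hne].
  - rewrite (rsum_ext N g f) by (intros; apply H; lia). ring.
  - rewrite IHN by (try lia; intros; apply H; lia). rewrite (H N) by lia. ring.
Qed.

Lemma rsum_cv N (f : nat -> nat -> R) (l : nat -> R) :
  (forall i, (i < N)%nat -> Un_cv (fun m => f m i) (l i)) ->
  Un_cv (fun m => rsum N (f m)) (rsum N l).
Proof.
  induction N; intros H; simpl.
  - intros e He. exists 0%nat. intros. unfold Rdist. rewrite Rminus_diag, Rabs_R0. lra.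
  - apply CV_plus; [apply IHN; intros; apply H; lia | apply H; lia].
Qed.

Lemma bw1 (u : nat -> R) (B : R) : (forall m, Rabs (u m) <= B) ->
  exists tau : nat -> nat, (forall m, (tau m < tau (S m))%nat) /\
    exists l, Un_cv (fun m => u (tau m)) l.
Proof.
  intros HB.
  destruct (Bolzano_Weierstrass u (fun c => -B <= c <= B) (compact_P3 (-B) B)) as [l Hl].
  { intros m. specialize (HB m). unfold Rabs in HB; destruct Rcase_abs in HB; lra. }
  assert (Hp : forall k N : nat, exists p, (N <= p)%nat /\ Rabs (u p - l) < / (INR k + 1)).
  { intros k N. assert (Hpos : 0 < / (INR k + 1)) by (apply Rinv_0_lt_compat; pose proof (pos_INR k); lra).
    destruct (Hl (disc l (mkposreal _ Hpos)) N) as [p [Hp1 Hp2]].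
    - exists (mkposreal _ Hpos). intros y Hy. exact Hy.
    - exists p. split; [exact Hp1|]. exact Hp2. }
  set (pick := fun k N => proj1_sig (constructive_indefinite_description _ (Hp k N))).
  assert (Hpick : forall k N, (N <= pick k N)%nat /\ Rabs (u (pick k N) - l) < / (INR k + 1)).
  { intros k N. unfold pick. destruct constructive_indefinite_description; simpl. exact a. }
  set (tau := fix tau (m : nat) : nat := match m with O => pick O O | S m' => pick (S m') (S (tau m')) end).
  exists tau. split.
  - intros m. simpl. destruct (Hpick (S m) (S (tau m))). lia.
  - exists l. intros e He.
    destruct (archimed_cor1 e He) as [K [HK1 HK2]].
    exists K. intros m Hm. unfold Rdist.
    assert (Ht : Rabs (u (tau m) - l) < / (INR m + 1)).
    { destruct m; simpl; [apply (Hpick 0%nat 0%nat)|apply (Hpick (S m))]. }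
    assert (/ (INR m + 1) <= / INR K).
    { apply Rinv_le_contravar. apply lt_0_INR; lia. apply le_INR in Hm. lra. }
    lra.
Qed.

Lemma incr_ge (tau : nat -> nat) : (forall m, (tau m < tau (S m))%nat) -> forall m, (m <= tau m)%nat.
Proof. intros H m. induction m; [lia|]. specialize (H m). lia. Qed.

Lemma cv_sub (u : nat -> R) l (tau : nat -> nat) : (forall m, (tau m < tau (S m))%nat) ->
  Un_cv u l -> Un_cv (fun m => u (tau m)) l.
Proof.
  intros Ht H e He. destruct (H e He) as [K HK]. exists K. intros m Hm.
  apply HK. pose proof (incr_ge tau Ht m). lia.
Qed.

Lemma bwN (N : nat) (B : R) (x : nat -> nat -> R) :
  (forall m i, (i < N)%nat -> Rabs (x m i) <= B) ->
  exists sigma : nat -> nat, (forall m, (sigma m < sigma (S m))%nat) /\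
    exists l : nat -> R, forall i, (i < N)%nat -> Un_cv (fun m => x (sigma m) i) (l i).
Proof.
  induction N; intros HB.
  - exists (fun m => m). split; [intros; lia|]. exists (fun _ => 0). intros; lia.
  - destruct IHN as [s [Hs [l Hl]]]. { intros; apply HB; lia. }
    destruct (bw1 (fun m => x (s m) N) B) as [t [Ht [l' Hl']]]. { intros; apply HB; lia. }
    exists (fun m => s (t m)). split.
    + intros m. assert (forall a b, (a < b)%nat -> (s a < s b)%nat).
      { intros a b Hab. induction Hab; [apply Hs|]. specialize (Hs m0). lia. }
      apply H, Ht.
    + exists (fun i => if Nat.eqb i N then l' else l i). intros i Hi.
      destruct (Nat.eqb_spec i N) as [->|Hne].
      * exact Hl'.
      * apply (cv_sub (fun m => x (s m) i)); [exact Ht|]. apply Hl; lia.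
Qed.

Lemma upd_upd y i s s' : upd (upd y i s) i s' = upd y i s'.
Proof. apply functional_extensionality; intros j; unfold upd. destruct (Nat.eqb j i); reflexivity. Qed.
Lemma upd_same y i s : upd y i s i = s.
Proof. unfold upd. rewrite Nat.eqb_refl. reflexivity. Qed.
Lemma upd_id y i : upd y i (y i) = y.
Proof. apply functional_extensionality; intros j; unfold upd. destruct (Nat.eqb_spec j i); subst; reflexivity. Qed.

Lemma dist_self N x : dist N x x = 0.
Proof. unfold dist. rewrite rsum_zero; [apply sqrt_0|]. intros; ring. Qed.

Lemma dist_nonneg N x z : 0 <= dist N x z.
Proof. apply sqrt_pos. Qed.

Lemma coord_le_dist N z x i : (i < N)%nat -> Rabs (z i - x i) <= dist N z x.
Proof.
  intros Hi. unfold dist. rewrite <- sqrt_Rsqr_abs. apply sqrt_le_1_alt.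
  unfold Rsqr. replace ((z i - x i) * (z i - x i)) with ((fun k => (z k - x k) ^ 2) i) by (simpl; ring).
  apply (rsum_single N (fun k => (z k - x k) ^ 2) i Hi). intros; apply pow2_ge_0.
Qed.

Lemma dist_le N w z x : (forall i, (i < N)%nat -> (w i - x i) ^ 2 <= (z i - x i) ^ 2) -> dist N w x <= dist N z x.
Proof. intros H. unfold dist. apply sqrt_le_1_alt. apply rsum_le. exact H. Qed.

Lemma mvt_bound f f' a b M :
  (forall s, Rmin a b <= s <= Rmax a b -> derivable_pt_lim f s (f' s) /\ Rabs (f' s) <= M) ->
  Rabs (f b - f a) <= M * Rabs (b - a).
Proof.
  intros H. destruct (Rtotal_order a b) as [Hab|[Hab|Hab]].
  - destruct (MVT_cor2 f f' a b Hab) as [c [Hc1 Hc2]].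
    { intros c Hc. apply H. rewrite Rmin_left, Rmax_right by lra. exact Hc. }
    rewrite Hc1, Rabs_mult. apply Rmult_le_compat_r; [apply Rabs_pos|].
    apply H. rewrite Rmin_left, Rmax_right by lra. lra.
  - subst. rewrite !Rminus_diag, Rabs_R0. destruct (H b) as [_ HM]. { unfold Rmin, Rmax; destruct Rle_dec; lra. }
    pose proof (Rabs_pos (f' b)). lra.
  - destruct (MVT_cor2 f f' b a Hab) as [c [Hc1 Hc2]].
    { intros c Hc. apply H. rewrite Rmin_right, Rmax_left by lra. exact Hc. }
    rewrite <- Rabs_Ropp, <- (Rabs_Ropp (b - a)). replace (- (f b - f a)) with (f a - f b) by ring.
    rewrite Hc1, Rabs_mult. replace (- (b - a)) with (a - b) by ring. apply Rmult_le_compat_r; [apply Rabs_pos|].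
    apply H. rewrite Rmin_right, Rmax_left by lra. lra.
Qed.

Definition zk (z x : nat -> R) (k : nat) : nat -> R := fun i => if Nat.ltb i k then z i else x i.

Lemma path_bound N F (G : nat -> (nat -> R) -> R) x d M : 0 <= M ->
  valid N x ->
  (forall w, valid N w -> dist N w x < d -> forall j, (j < N)%nat -> has_partial F j (G j) w /\ Rabs (G j w) <= M) ->
  forall z, valid N z -> dist N z x < d -> Rabs (F z - F x) <= INR N * M * dist N z x.
Proof.
  intros HM Hx H z Hz Hzd.
  assert (Hclaim : forall k, (k <= N)%nat -> Rabs (F (zk z x k) - F x) <= INR k * M * dist N z x).
  { induction k; intros Hk.
    - replace (zk z x 0) with x. rewrite Rminus_diag, Rabs_R0. simpl. lra.
      apply functional_extensionality; intros i. unfold zk. destruct i; reflexivity.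
    - specialize (IHk ltac:(lia)).
      assert (Hstep : Rabs (F (zk z x (S k)) - F (zk z x k)) <= M * dist N z x).
      { set (f := fun s => F (upd (zk z x k) k s)).
        assert (E1 : f (x k) = F (zk z x k)).
        { unfold f. f_equal. apply functional_extensionality; intros i. unfold upd, zk.
          destruct (Nat.eqb_spec i k); [subst; rewrite Nat.ltb_irrefl; reflexivity|reflexivity]. }
        assert (E2 : f (z k) = F (zk z x (S k))).
        { unfold f. f_equal. apply functional_extensionality; intros i. unfold upd, zk.
          destruct (Nat.eqb_spec i k); [subst; replace (Nat.ltb k (S k)) with true; [reflexivity|symmetry; apply Nat.ltb_lt; lia]|].
          destruct (Nat.ltb_spec i k), (Nat.ltb_spec i (S k)); try reflexivity; lia. }
        rewrite <- E1, <- E2.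
        eapply Rle_trans.
        + apply (mvt_bound f (fun s => G k (upd (zk z x k) k s)) (x k) (z k) M).
          intros s Hs.
          set (w := upd (zk z x k) k s).
          assert (Hw : valid N w).
          { intros i Hi. unfold w, upd, zk. destruct (Nat.eqb_spec i k); [lia|]. destruct (Nat.ltb i k); [apply Hz|apply Hx]; lia. }
          assert (Hwd : dist N w x < d).
          { eapply Rle_lt_trans; [|exact Hzd]. apply dist_le. intros i Hi. unfold w, upd, zk.
            destruct (Nat.eqb_spec i k).
            - subst. assert (Rabs (s - x k) <= Rabs (z k - x k)).
              { unfold Rmin, Rmax in Hs. destruct Rle_dec; unfold Rabs; destruct Rcase_abs; destruct Rcase_abs; lra. }
              rewrite <- !Rsqr_pow2. apply Rsqr_le_abs_1. exact H0.
            - destruct (Nat.ltb i k); [apply Rle_refl|]. replace ((x i - x i) ^ 2) with 0 by ring. apply pow2_ge_0. }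
          destruct (H w Hw Hwd k ltac:(lia)) as [Hp Hb]. split; [|exact Hb].
          unfold has_partial in Hp. unfold w in Hp. replace (upd (zk z x k) k s k) with s in Hp by (symmetry; apply upd_same).
          unfold f. replace (fun s0 => F (upd (zk z x k) k s0)) with (fun s0 => F (upd (upd (zk z x k) k s) k s0)).
          exact Hp. apply functional_extensionality; intros; rewrite upd_upd; reflexivity.
        + apply Rmult_le_compat_l; [exact HM|]. apply coord_le_dist. lia. }
      replace (F (zk z x (S k)) - F x) with ((F (zk z x (S k)) - F (zk z x k)) + (F (zk z x k) - F x)) by ring.
      eapply Rle_trans; [apply Rabs_triang|]. rewrite S_INR. lra. }
  replace z with (zk z x N) at 1. apply Hclaim; lia.
  apply functional_extensionality; intros i. unfold zk. destruct (Nat.ltb_spec i N); [reflexivity|].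
  rewrite Hx, Hz by lia. reflexivity.
Qed.

Lemma fin_delta N (P : nat -> R -> Prop) :
  (forall i d d', 0 < d' <= d -> P i d -> P i d') ->
  (forall i, (i < N)%nat -> exists d, 0 < d /\ P i d) ->
  exists d, 0 < d /\ forall i, (i < N)%nat -> P i d.
Proof.
  intros Hmono H. induction N.
  - exists 1. split; [lra|]. intros; lia.
  - destruct IHN as [d1 [Hd1 H1]]. { intros; apply H; lia. }
    destruct (H N ltac:(lia)) as [d2 [Hd2 H2]].
    exists (Rmin d1 d2). assert (0 < Rmin d1 d2) by (unfold Rmin; destruct Rle_dec; lra).
    split; [assumption|]. intros i Hi.
    destruct (Nat.eq_dec i N) as [->|Hne].
    + apply (Hmono N d2); [split; [assumption|apply Rmin_r]|exact H2].
    + apply (Hmono i d1); [split; [assumption|apply Rmin_l]|apply H1; lia].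
Qed.

Lemma C2_lip N F G H x r : valid N x -> C2_ball N F G H x r ->
  exists d C, 0 < d /\ forall z, valid N z -> dist N z x < d -> Rabs (F z - F x) <= C * dist N z x.
Proof.
  intros Hx [Hr HC].
  assert (Hx0 : dist N x x < r) by (rewrite dist_self; exact Hr).
  destruct (fin_delta N (fun i d => forall j, (j < N)%nat -> forall w, valid N w -> dist N w x < d -> Rabs (H i j w - H i j x) < 1)) as [d1 [Hd1 H1]].
  { intros i d d' Hd Hp j Hj w Hw Hwd. apply (Hp j Hj w Hw). lra. }
  { intros i Hi. apply (fin_delta N (fun j d => forall w, valid N w -> dist N w x < d -> Rabs (H i j w - H i j x) < 1)).
    - intros j d d' Hd Hp w Hw Hwd. apply (Hp w Hw). lra.
    - intros j Hj. destruct (HC x Hx Hx0 i j Hi Hj) as [_ [_ Hc]].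
      destruct (Hc 1 ltac:(lra)) as [d [Hd Hd']]. exists d. split; [exact Hd|]. exact Hd'. }
  set (d2 := Rmin d1 r).
  assert (Hd2 : 0 < d2) by (unfold d2, Rmin; destruct Rle_dec; lra).
  assert (Hd2a : d2 <= d1) by apply Rmin_l. assert (Hd2b : d2 <= r) by apply Rmin_r.
  set (BH := rsum N (fun i => rsum N (fun j => Rabs (H i j x))) + 1).
  assert (HBH : forall i j w, (i < N)%nat -> (j < N)%nat -> valid N w -> dist N w x < d2 -> Rabs (H i j w) <= BH).
  { intros i j w Hi Hj Hw Hwd. pose proof (H1 i Hi j Hj w Hw ltac:(lra)).
    assert (Rabs (H i j x) <= rsum N (fun i => rsum N (fun j => Rabs (H i j x)))).
    { eapply Rle_trans; [|apply (rsum_single N (fun i => rsum N (fun j => Rabs (H i j x))) i Hi)].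
      - apply (rsum_single N (fun j => Rabs (H i j x)) j Hj). intros; apply Rabs_pos.
      - intros; apply rsum_nonneg; intros; apply Rabs_pos. }
    pose proof (Rabs_triang_inv (H i j w) (H i j x)). unfold BH. lra. }
  assert (HBH0 : 0 <= BH) by (unfold BH; pose proof (rsum_nonneg N (fun i => rsum N (fun j => Rabs (H i j x))) ltac:(intros; apply rsum_nonneg; intros; apply Rabs_pos)); lra).
  set (BG := rsum N (fun i => Rabs (G i x)) + INR N * BH * d2).
  assert (HBG : forall i w, (i < N)%nat -> valid N w -> dist N w x < d2 -> Rabs (G i w) <= BG).
  { intros i w Hi Hw Hwd.
    assert (Hg := path_bound N (G i) (H i) x d2 BH HBH0 Hx).
    specialize (Hg ltac:(intros w' Hw' Hw'd j Hj; split; [apply (HC w' Hw' ltac:(lra) i j Hi Hj)|apply HBH; auto]) w Hw Hwd).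
    assert (INR N * BH * dist N w x <= INR N * BH * d2).
    { apply Rmult_le_compat_l; [apply Rmult_le_pos; [apply pos_INR|exact HBH0]|lra]. }
    pose proof (rsum_single N (fun i => Rabs (G i x)) i Hi ltac:(intros; apply Rabs_pos)). simpl in H2.
    pose proof (Rabs_triang_inv (G i w) (G i x)). unfold BG. lra. }
  assert (HBG0 : 0 <= BG).
  { unfold BG. pose proof (rsum_nonneg N (fun i => Rabs (G i x)) ltac:(intros; apply Rabs_pos)).
    pose proof (pos_INR N). assert (0 <= INR N * BH * d2) by (apply Rmult_le_pos; [apply Rmult_le_pos|]; lra). lra. }
  exists d2, (INR N * BG). split; [exact Hd2|].
  intros z Hz Hzd.
  apply (path_bound N F G x d2 BG HBG0 Hx); auto.
  intros w Hw Hwd j Hj. split; [apply (HC w Hw ltac:(lra) j j Hj Hj)|apply HBG; auto].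
Qed.

Definition proj (n : nat) (y : nat -> R) : nat -> R := fun i =>
  if Nat.ltb i n then rad n * y i / sqrt (rsum n (fun k => y k ^ 2))
  else if Nat.eqb i n then y n else 0.

Lemma hext_proj n u y : hext n u y = u (proj n y).
Proof. reflexivity. Qed.

Lemma rad_pos n : (2 <= n)%nat -> 0 < rad n.
Proof. intros Hn. unfold rad. apply sqrt_lt_R0. apply le_INR in Hn. simpl in Hn. lra. Qed.

Lemma proj_cyl n y : (2 <= n)%nat -> 0 < rsum n (fun k => y k ^ 2) -> on_cyl n (proj n y) /\ proj n y n = y n.
Proof.
  intros Hn HS. split.
  - split.
    + intros i Hi. unfold proj. destruct (Nat.ltb_spec i n); [lia|]. destruct (Nat.eqb_spec i n); [lia|reflexivity].
    + set (S := rsum n (fun k => y k ^ 2)) in *.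
      rewrite (rsum_ext n _ (fun k => (rad n ^ 2 / S) * y k ^ 2)).
      * rewrite rsum_scal. fold S. field. lra.
      * intros i Hi. unfold proj. destruct (Nat.ltb_spec i n); [|lia].
        assert (Hs : sqrt S ^ 2 = S) by (simpl; rewrite Rmult_1_r; apply sqrt_sqrt; lra).
        assert (0 < sqrt S) by (apply sqrt_lt_R0; lra).
        fold S. replace (rad n ^ 2 / S) with (rad n ^ 2 / (sqrt S ^ 2)) by (rewrite Hs; reflexivity). field. lra.
  - unfold proj. rewrite Nat.ltb_irrefl, Nat.eqb_refl. reflexivity.
Qed.

Lemma proj_id n x : (2 <= n)%nat -> on_cyl n x -> proj n x = x.
Proof.
  intros Hn [Hv Hs]. apply functional_extensionality; intros i. unfold proj.
  rewrite Hs. assert (Hr := rad_pos n Hn).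
  assert (sqrt (rad n ^ 2) = rad n) by (apply sqrt_pow2; lra). rewrite H.
  destruct (Nat.ltb_spec i n). field; lra.
  destruct (Nat.eqb_spec i n). subst; reflexivity. rewrite Hv by lia. reflexivity.
Qed.

Lemma hext_cyl n u x : (2 <= n)%nat -> on_cyl n x -> hext n u x = u x.
Proof. intros Hn Hx. rewrite hext_proj, proj_id; auto. Qed.

Lemma dist_upd N x i s : (i < N)%nat -> dist N (upd x i s) x = Rabs (s - x i).
Proof.
  intros Hi. unfold dist.
  rewrite (rsum_change N (fun j => (x j - x j) ^ 2) _ i Hi).
  - rewrite rsum_zero by (intros; ring). rewrite upd_same.
    replace (0 - (x i - x i) ^ 2 + (s - x i) ^ 2) with ((s - x i) ^ 2) by ring.
    rewrite <- Rsqr_pow2. apply sqrt_Rsqr_abs.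
  - intros j Hj Hne. unfold upd. destruct (Nat.eqb_spec j i); [lia|reflexivity].
Qed.

Lemma upd_valid N x i s : valid N x -> (i < N)%nat -> valid N (upd x i s).
Proof. intros Hx Hi j Hj. unfold upd. destruct (Nat.eqb_spec j i); [lia|auto]. Qed.

Lemma sqrt_lt_eps a e : 0 <= a -> 0 < e -> a < e * e -> sqrt a < e.
Proof. intros Ha He H. rewrite <- (sqrt_square e) by lra. apply sqrt_lt_1_alt. lra. Qed.

Lemma cv_const (a : R) : Un_cv (fun _ => a) a.
Proof. intros e He. exists 0%nat. intros. unfold Rdist. rewrite Rminus_diag, Rabs_R0. lra. Qed.

Lemma cv_sq (a : nat -> R) l : Un_cv a l -> Un_cv (fun m => a m ^ 2) (l ^ 2).
Proof.
  intros H e He. destruct (CV_mult a a l l H H e He) as [N HN]. exists N. intros m Hm.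
  replace (a m ^ 2) with (a m * a m) by ring. replace (l ^ 2) with (l * l) by ring. apply HN; auto.
Qed.

Lemma compact_K n (u : (nat -> R) -> R) c D (xs : nat -> nat -> R) :
  (2 <= n)%nat -> 0 < c ->
  (forall x, on_cyl n x -> c <= x n <= D -> exists d C, 0 < d /\
     forall z, on_cyl n z -> dist (S n) z x < d -> Rabs (u z - u x) <= C * dist (S n) z x) ->
  (forall m, on_cyl n (xs m) /\ c <= xs m n <= D) ->
  exists sigma xst, (forall m, (sigma m < sigma (S m))%nat) /\ on_cyl n xst /\ c <= xst n <= D /\
    Un_cv (fun m => u (xs (sigma m))) (u xst) /\ Un_cv (fun m => xs (sigma m) n) (xst n).
Proof.
  intros Hn Hc Hlip Hxs.
  assert (Hr := rad_pos n Hn).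
  destruct (bwN (S n) (rad n + D) xs) as [s [Hs [l Hl]]].
  { intros m i Hi. destruct (Hxs m) as [[Hv Hsum] Hb].
    destruct (Nat.eq_dec i n) as [->|Hne].
    - rewrite Rabs_right by lra. lra.
    - assert (xs m i ^ 2 <= rad n ^ 2).
      { rewrite <- Hsum. apply (rsum_single n (fun k => xs m k ^ 2) i ltac:(lia)). intros; apply pow2_ge_0. }
      assert (Rabs (xs m i) <= rad n).
      { rewrite <- (Rabs_right (rad n)) by lra. apply Rsqr_le_abs_0. rewrite !Rsqr_pow2. exact H. }
      lra. }
  set (xst := fun i => if Nat.leb i n then l i else 0).
  assert (Hcv : forall i, (i < S n)%nat -> Un_cv (fun m => xs (s m) i) (xst i)).
  { intros i Hi. unfold xst. destruct (Nat.leb_spec i n); [apply Hl; exact Hi|lia]. }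
  assert (Hcyl : on_cyl n xst).
  { split.
    - intros i Hi. unfold xst. destruct (Nat.leb_spec i n); [lia|reflexivity].
    - assert (H1 : Un_cv (fun m => rsum n (fun i => xs (s m) i ^ 2)) (rsum n (fun i => xst i ^ 2))).
      { apply (rsum_cv n (fun m i => xs (s m) i ^ 2) (fun i => xst i ^ 2)). intros i Hi. apply cv_sq. apply Hcv. lia. }
      replace (fun m => rsum n (fun i => xs (s m) i ^ 2)) with (fun _ : nat => rad n ^ 2) in H1.
      + apply (UL_sequence _ _ _ H1 (cv_const _)).
      + apply functional_extensionality; intros m. symmetry. apply (Hxs (s m)). }
  assert (Hbn : c <= xst n <= D).
  { split.
    - apply Rle_cv_lim with (Un := fun _ => c) (Vn := fun m => xs (s m) n); [intros m; apply (Hxs (s m))|apply cv_const|apply Hcv; lia].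
    - apply Rle_cv_lim with (Un := fun m => xs (s m) n) (Vn := fun _ => D); [intros m; apply (Hxs (s m))|apply Hcv; lia|apply cv_const]. }
  exists s, xst. split; [exact Hs|]. split; [exact Hcyl|]. split; [exact Hbn|]. split; [|apply Hcv; lia].
  assert (Hd0 : Un_cv (fun m => rsum (S n) (fun i => (xs (s m) i - xst i) ^ 2)) 0).
  { replace 0 with (rsum (S n) (fun i => (xst i - xst i) ^ 2)) by (apply rsum_zero; intros; ring).
    apply (rsum_cv (S n) (fun m i => (xs (s m) i - xst i) ^ 2) (fun i => (xst i - xst i) ^ 2)).
    intros i Hi. apply cv_sq. apply CV_minus; [apply Hcv; exact Hi|apply cv_const]. }
  destruct (Hlip xst Hcyl Hbn) as [d [C [Hd HC]]].
  intros e He.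
  set (eta := Rmin d (e / (Rabs C + 1))).
  assert (Heta : 0 < eta).
  { unfold eta, Rmin. destruct Rle_dec; [lra|]. apply Rdiv_lt_0_compat; [lra|pose proof (Rabs_pos C); lra]. }
  destruct (Hd0 (eta * eta) ltac:(nra)) as [N HN]. exists N. intros m Hm.
  specialize (HN m Hm). unfold Rdist in HN |- *. rewrite Rminus_0_r in HN.
  set (q := rsum (S n) (fun i => (xs (s m) i - xst i) ^ 2)) in HN.
  assert (Hq0 : 0 <= q) by (apply rsum_nonneg; intros; apply pow2_ge_0).
  rewrite Rabs_right in HN by lra.
  assert (Hdist : dist (S n) (xs (s m)) xst < eta) by (apply sqrt_lt_eps; auto).
  assert (Hdd : dist (S n) (xs (s m)) xst < d) by (pose proof (Rmin_l d (e / (Rabs C + 1))); fold eta in H; lra).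
  specialize (HC (xs (s m)) (proj1 (Hxs (s m))) Hdd).
  assert (Hle : eta <= e / (Rabs C + 1)) by apply Rmin_r.
  pose proof (dist_nonneg (S n) (xs (s m)) xst).
  assert (C * dist (S n) (xs (s m)) xst <= Rabs C * dist (S n) (xs (s m)) xst) by (apply Rmult_le_compat_r; [lra|apply Rle_abs]).
  assert (Rabs C * dist (S n) (xs (s m)) xst <= Rabs C * eta) by (apply Rmult_le_compat_l; [apply Rabs_pos|lra]).
  assert ((Rabs C + 1) * eta <= e).
  { apply (Rmult_le_compat_l (Rabs C + 1)) in Hle; [|pose proof (Rabs_pos C); lra].
    replace ((Rabs C + 1) * (e / (Rabs C + 1))) with e in Hle by (field; pose proof (Rabs_pos C); lra). exact Hle. }
  lra.
Qed.

Definition phi (c D t : R) : R := (t * t - c * c) * (D - t).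
Definition phi1 (c D t : R) : R := -3 * t * t + 2 * D * t + c * c.
Definition phi2 (D t : R) : R := -6 * t + 2 * D.

Lemma dphi c D s : derivable_pt_lim (phi c D) s (phi1 c D s).
Proof. unfold phi, phi1. apply is_derive_Reals. auto_derive; [exact I|]. ring. Qed.
Lemma dphi1 c D s : derivable_pt_lim (phi1 c D) s (phi2 D s).
Proof. unfold phi1, phi2. apply is_derive_Reals. auto_derive; [exact I|]. ring. Qed.

Lemma choose_seq (P : nat -> (nat -> R) -> Prop) : (forall m, exists x, P m x) -> exists xs : nat -> nat -> R, forall m, P m (xs m).
Proof.
  intros H. exists (fun m => proj1_sig (constructive_indefinite_description _ (H m))).
  intros m. destruct constructive_indefinite_description; simpl. exact p.
Qed.

Lemma rho_cv (a b : nat -> R) (la lb : R) c D : Un_cv a la -> Un_cv b lb -> lb <> 0 ->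
  Un_cv (fun m => phi c D (a m) / b m) (phi c D la / lb).
Proof.
  intros Ha Hb Hlb. unfold Rdiv. apply CV_mult.
  - apply continuity_seq; [|exact Ha]. apply derivable_continuous_pt. exists (phi1 c D la). apply dphi.
  - assert (Hc : continuity_pt (/ id)%F lb) by (apply continuity_pt_inv; [apply derivable_continuous_pt; apply derivable_pt_id|exact Hlb]).
    exact (continuity_seq _ b lb Hc Hb).
Qed.

Lemma maximizer n (u : (nat -> R) -> R) c D : (2 <= n)%nat -> 0 < c -> c < D ->
  (forall x, on_cyl n x -> c <= x n <= D -> exists d C, 0 < d /\
     forall z, on_cyl n z -> dist (S n) z x < d -> Rabs (u z - u x) <= C * dist (S n) z x) ->
  (forall x, on_cyl n x -> c <= x n <= D -> 0 < u x) ->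
  exists xst M, 0 < M /\ on_cyl n xst /\ c < xst n < D /\ phi c D (xst n) = M * u xst /\
    forall x, on_cyl n x -> c <= x n <= D -> phi c D (x n) <= M * u x.
Proof.
  intros Hn Hc HcD Hlip Hpos.
  set (E := fun r => exists x, (on_cyl n x /\ c <= x n <= D) /\ r = phi c D (x n) / u x).
  set (x1 := fun i => if Nat.eqb i 0 then rad n else if Nat.eqb i n then (c + D) / 2 else 0).
  assert (Hx1 : on_cyl n x1 /\ c <= x1 n <= D).
  { split; [split|].
    - intros i Hi. unfold x1. destruct (Nat.eqb_spec i 0); [lia|]. destruct (Nat.eqb_spec i n); [lia|reflexivity].
    - rewrite (rsum_change n (fun _ => 0) (fun k => x1 k ^ 2) 0%nat).
      + rewrite rsum_zero by reflexivity. unfold x1. simpl. ring.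
      + lia.
      + intros j Hj Hne. unfold x1. destruct (Nat.eqb_spec j 0); [lia|]. destruct (Nat.eqb_spec j n); [lia|]. ring.
    - unfold x1. destruct (Nat.eqb_spec n 0); [lia|]. rewrite Nat.eqb_refl. lra. }
  assert (Hr1 : 0 < phi c D (x1 n) / u x1).
  { apply Rdiv_lt_0_compat; [|apply Hpos; apply Hx1].
    unfold x1. destruct (Nat.eqb_spec n 0); [lia|]. rewrite Nat.eqb_refl. unfold phi. apply Rmult_lt_0_compat; nra. }
  assert (Hcomp : forall xs : nat -> nat -> R, (forall m, on_cyl n (xs m) /\ c <= xs m n <= D) ->
     exists sigma xst, (forall m, (sigma m < sigma (S m))%nat) /\ (on_cyl n xst /\ c <= xst n <= D) /\
       Un_cv (fun m => phi c D (xs (sigma m) n) / u (xs (sigma m))) (phi c D (xst n) / u xst)).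
  { intros xs Hxs. destruct (compact_K n u c D xs Hn Hc Hlip Hxs) as [s [xst [Hs [Hcy [Hb [Hu Hxn]]]]]].
    exists s, xst. split; [exact Hs|]. split; [split; assumption|].
    apply rho_cv; auto. apply Rgt_not_eq. apply Hpos; auto. }
  assert (HB : bound E).
  { apply NNPP. intros Hnb.
    assert (Hm : forall m, exists x, (on_cyl n x /\ c <= x n <= D) /\ INR m < phi c D (x n) / u x).
    { intros m. apply NNPP. intros Hno. apply Hnb. exists (INR m). intros r [x [Hx ->]].
      apply Rnot_lt_le. intros Hlt. apply Hno. exists x. auto. }
    destruct (choose_seq _ Hm) as [xs Hxs].
    destruct (Hcomp xs ltac:(intros m; apply Hxs)) as [s [xst [Hs [_ Hcv]]]].
    destruct (Hcv 1 ltac:(lra)) as [N HN].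
    destruct (INR_archimed 1 (phi c D (xst n) / u xst + 1) ltac:(lra)) as [K HK].
    set (m := Nat.max N K).
    specialize (HN m ltac:(unfold m; lia)). unfold Rdist in HN.
    destruct (Hxs (s m)) as [_ Hlt].
    assert (INR K <= INR (s m)) by (apply le_INR; pose proof (incr_ge s Hs m); unfold m in *; lia).
    apply Rabs_def2 in HN. lra. }
  destruct (completeness E HB ltac:(exists (phi c D (x1 n) / u x1); exists x1; auto)) as [M [HMub HMl]].
  assert (HM1 : phi c D (x1 n) / u x1 <= M) by (apply HMub; exists x1; auto).
  assert (Hm : forall m, exists x, (on_cyl n x /\ c <= x n <= D) /\ M - / (INR m + 1) < phi c D (x n) / u x).
  { intros m. apply NNPP. intros Hno.
    assert (Hpm : 0 < / (INR m + 1)) by (apply Rinv_0_lt_compat; pose proof (pos_INR m); lra).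
    assert (M <= M - / (INR m + 1)).
    { apply HMl. intros r [x [Hx ->]]. apply Rnot_lt_le. intros Hlt. apply Hno. exists x. auto. }
    lra. }
  destruct (choose_seq _ Hm) as [xs Hxs].
  destruct (Hcomp xs ltac:(intros m; apply Hxs)) as [s [xst [Hs [Hxst Hcv]]]].
  assert (Hup : phi c D (xst n) / u xst <= M) by (apply HMub; exists xst; auto).
  assert (Heq : phi c D (xst n) / u xst = M).
  { apply Rle_antisym; [exact Hup|]. apply Rnot_lt_le. intros Hlt.
    set (e := (M - phi c D (xst n) / u xst) / 2).
    destruct (Hcv e ltac:(unfold e; lra)) as [N HN].
    destruct (archimed_cor1 e ltac:(unfold e; lra)) as [K [HK1 HK2]].
    set (m := Nat.max N K).
    specialize (HN m ltac:(unfold m; lia)). unfold Rdist in HN. apply Rabs_def2 in HN.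
    destruct (Hxs (s m)) as [_ Hlt2].
    assert (/ (INR (s m) + 1) <= / INR K).
    { apply Rinv_le_contravar. apply lt_0_INR; lia. assert (INR K <= INR (s m)) by (apply le_INR; pose proof (incr_ge s Hs m); unfold m in *; lia). lra. }
    unfold e in *. lra. }
  assert (HuP : 0 < u xst) by (apply Hpos; apply Hxst).
  exists xst, M. split; [lra|]. split; [apply Hxst|].
  assert (Hphi : phi c D (xst n) = M * u xst) by (rewrite <- Heq; field; lra).
  split; [|split; [exact Hphi|]].
  - destruct Hxst as [_ [Hb1 Hb2]].
    assert (0 < phi c D (xst n)) by (rewrite Hphi; apply Rmult_lt_0_compat; lra).
    split.
    + destruct Hb1 as [Hb1|Hb1]; [exact Hb1|]. exfalso. unfold phi in H. rewrite <- Hb1 in H. nra.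
    + destruct Hb2 as [Hb2|Hb2]; [exact Hb2|]. exfalso. unfold phi in H. rewrite Hb2 in H. nra.
  - intros x Hx Hxb. assert (Hux : 0 < u x) by (apply Hpos; auto).
    assert (phi c D (x n) / u x <= M) by (apply HMub; exists x; auto).
    apply (Rmult_le_compat_r (u x)) in H; [|lra].
    replace (phi c D (x n) / u x * u x) with (phi c D (x n)) in H by (field; lra). lra.
Qed.

Lemma key n Omega c D : (2 <= n)%nat -> 0 < c -> c * c < 2 -> c < D -> 8 < D * (2 - c * c) ->
  (forall x, on_cyl n x -> c <= x n <= D -> Omega x) -> ~ stable n Omega.
Proof.
  intros Hn Hc Hc2 HcD HD HOm [u Hu].
  assert (Hr := rad_pos n Hn).
  assert (Hpos : forall x, on_cyl n x -> c <= x n <= D -> 0 < u x).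
  { intros x Hx Hb. destruct (Hu x Hx (HOm x Hx Hb)) as [G [H [r [_ [_ Hp]]]]]. exact Hp. }
  assert (Hlip : forall x, on_cyl n x -> c <= x n <= D -> exists d C, 0 < d /\
     forall z, on_cyl n z -> dist (S n) z x < d -> Rabs (u z - u x) <= C * dist (S n) z x).
  { intros x Hx Hb. destruct (Hu x Hx (HOm x Hx Hb)) as [G [H [r [HC2 _]]]].
    destruct (C2_lip (S n) (hext n u) G H x r (proj1 Hx) HC2) as [d [C [Hd HdC]]].
    exists d, C. split; [exact Hd|]. intros z Hz Hzd.
    specialize (HdC z (proj1 Hz) Hzd). rewrite !hext_cyl in HdC by auto. exact HdC. }
  destruct (maximizer n u c D Hn Hc HcD Hlip Hpos) as [xst [M [HM [Hxst [Ht0 [Hphi Hglob]]]]]].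
  destruct (Hu xst Hxst (HOm xst Hxst ltac:(lra))) as [G [H [r [HC2 [HL Hux]]]]].
  destruct HC2 as [Hr0 HC].
  assert (Hvx : valid (S n) xst) by apply Hxst.
  assert (Hx0 : dist (S n) xst xst < r) by (rewrite dist_self; exact Hr0).
  set (t0 := xst n) in *.
  assert (Hhx : hext n u xst = u xst) by (apply hext_cyl; auto).
  assert (Hsph : forall i, (i < n)%nat -> G i xst = 0 /\ 0 <= H i i xst).
  { intros i Hi.
    set (del := Rmin r (rad n)).
    assert (Hdel : 0 < del) by (unfold del, Rmin; destruct Rle_dec; lra).
    destruct (min2 (fun s => hext n u (upd xst i s)) (fun s => G i (upd xst i s)) (xst i) del (H i i xst) Hdel) as [Hk HL0].
    - intros s Hs. rewrite upd_id, Hhx. rewrite hext_proj.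
      set (y := upd xst i s).
      assert (Hsum : rsum n (fun k => y k ^ 2) = rad n ^ 2 - xst i ^ 2 + s ^ 2).
      { unfold y. rewrite (rsum_change n (fun k => xst k ^ 2) _ i Hi).
        - destruct Hxst as [_ ->]. rewrite upd_same. reflexivity.
        - intros j Hj Hne. unfold upd. destruct (Nat.eqb_spec j i); [lia|reflexivity]. }
      assert (Hxi : xst i ^ 2 <= rad n ^ 2).
      { destruct Hxst as [_ Hs2]. rewrite <- Hs2. apply (rsum_single n (fun k => xst k ^ 2) i Hi). intros; apply pow2_ge_0. }
      assert (HS : 0 < rsum n (fun k => y k ^ 2)).
      { rewrite Hsum. destruct (Req_dec s 0) as [->|Hs0].
        - assert (Habs : Rabs (0 - xst i) < rad n) by (pose proof (Rmin_r r (rad n)); fold del in H0; lra).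
          rewrite Rabs_minus_sym, Rminus_0_r in Habs. unfold Rabs in Habs. destruct Rcase_abs in Habs; nra.
        - assert (0 < s ^ 2) by (apply pow2_gt_0; exact Hs0). lra. }
      destruct (proj_cyl n y Hn HS) as [Hcy Hyn].
      assert (Hyn' : proj n y n = t0) by (rewrite Hyn; unfold y, upd; destruct (Nat.eqb_spec n i); [lia|reflexivity]).
      assert (Hg := Hglob (proj n y) Hcy ltac:(rewrite Hyn'; lra)). rewrite Hyn' in Hg.
      assert (M * u xst <= M * u (proj n y)) by lra.
      apply Rmult_le_reg_l in H0; lra.
    - intros s Hs. set (z := upd xst i s).
      assert (Hzv : valid (S n) z) by (apply upd_valid; auto).
      assert (Hzd : dist (S n) z xst < r) by (unfold z; rewrite dist_upd by lia; pose proof (Rmin_l r (rad n)); fold del in H0; lra).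
      destruct (HC z Hzv Hzd i i ltac:(lia) ltac:(lia)) as [Hp _].
      unfold has_partial in Hp. unfold z in Hp. rewrite upd_same in Hp.
      replace (fun s0 => hext n u (upd xst i s0)) with (fun s0 => hext n u (upd (upd xst i s) i s0)).
      exact Hp. apply functional_extensionality; intros; rewrite upd_upd; reflexivity.
    - destruct (HC xst Hvx Hx0 i i ltac:(lia) ltac:(lia)) as [_ [Hp _]]. exact Hp.
    - rewrite upd_id in Hk. split; assumption. }
  assert (Hax : M * G n xst = phi1 c D t0 /\ 0 <= M * H n n xst - phi2 D t0).
  { set (del := Rmin r (Rmin (t0 - c) (D - t0))).
    assert (Hdel : 0 < del) by (unfold del, Rmin; destruct Rle_dec; destruct Rle_dec; lra).
    assert (Hdel1 : del <= r) by apply Rmin_l.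
    assert (Hdel2 : del <= t0 - c) by (unfold del; pose proof (Rmin_r r (Rmin (t0 - c) (D - t0))); pose proof (Rmin_l (t0 - c) (D - t0)); lra).
    assert (Hdel3 : del <= D - t0) by (unfold del; pose proof (Rmin_r r (Rmin (t0 - c) (D - t0))); pose proof (Rmin_r (t0 - c) (D - t0)); lra).
    destruct (min2 (fun s => M * hext n u (upd xst n s) - phi c D s) (fun s => M * G n (upd xst n s) - phi1 c D s) t0 del (M * H n n xst - phi2 D t0) Hdel) as [Hk HL0].
    - intros s Hs. unfold t0 at 1. rewrite upd_id, Hhx. fold t0.
      set (y := upd xst n s).
      assert (Hcy : on_cyl n y).
      { split; [apply upd_valid; auto|]. destruct Hxst as [_ Hs2]. rewrite <- Hs2. apply rsum_ext.
        intros k Hk. unfold y, upd. destruct (Nat.eqb_spec k n); [lia|reflexivity]. }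
      assert (Hyn : y n = s) by (unfold y; apply upd_same).
      apply Rabs_def2 in Hs.
      assert (Hg := Hglob y Hcy ltac:(rewrite Hyn; lra)). rewrite Hyn in Hg.
      rewrite (hext_cyl n u y Hn Hcy). lra.
    - intros s Hs. set (z := upd xst n s).
      assert (Hzv : valid (S n) z) by (apply upd_valid; auto).
      assert (Hzd : dist (S n) z xst < r) by (unfold z; rewrite dist_upd by lia; fold t0; lra).
      destruct (HC z Hzv Hzd n n ltac:(lia) ltac:(lia)) as [Hp _].
      unfold has_partial in Hp. unfold z in Hp. rewrite upd_same in Hp.
      assert (Hp' : derivable_pt_lim (fun s0 => hext n u (upd xst n s0)) s (G n (upd xst n s))).
      { replace (fun s0 => hext n u (upd xst n s0)) with (fun s0 => hext n u (upd (upd xst n s) n s0)).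
        exact Hp. apply functional_extensionality; intros; rewrite upd_upd; reflexivity. }
      assert (X : derivable_pt_lim (mult_real_fct M (fun s0 => hext n u (upd xst n s0)) - phi c D)%F s (M * G n (upd xst n s) - phi1 c D s)).
      { apply derivable_pt_lim_minus; [apply derivable_pt_lim_scal; exact Hp'|apply dphi]. }
      exact X.
    - destruct (HC xst Hvx Hx0 n n ltac:(lia) ltac:(lia)) as [_ [Hp _]].
      assert (X : derivable_pt_lim (mult_real_fct M (fun s0 => G n (upd xst n s0)) - phi1 c D)%F t0 (M * H n n xst - phi2 D t0)).
      { apply derivable_pt_lim_minus; [apply derivable_pt_lim_scal; exact Hp|apply dphi1]. }
      exact X.
    - unfold t0 in Hk at 1. rewrite upd_id in Hk. split; lra. }
  unfold Lop, cylA2 in HL.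
  change (rsum (S n) (fun i => H i i xst)) with (rsum n (fun i => H i i xst) + H n n xst) in HL.
  change (rsum (S n) (fun i => xst i * G i xst)) with (rsum n (fun i => xst i * G i xst) + xst n * G n xst) in HL.
  rewrite (rsum_zero n (fun i => xst i * G i xst)) in HL by (intros i Hi; rewrite (proj1 (Hsph i Hi)); ring).
  assert (HA : 0 <= rsum n (fun i => H i i xst)) by (apply rsum_nonneg; intros i Hi; apply (Hsph i Hi)).
  rewrite Hhx in HL. fold t0 in HL.
  set (A := rsum n (fun i => H i i xst)) in *.
  assert (HML : M * A + M * H n n xst - / 2 * t0 * (M * G n xst) + M * u xst = 0).
  { clearbody A t0. replace (M * A + M * H n n xst - / 2 * t0 * (M * G n xst) + M * u xst) with
      (M * (A + H n n xst - / 2 * (0 + t0 * G n xst) + (/ 2 + / 2) * u xst)) by field.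
    rewrite HL. ring. }
  destruct Hax as [HG HH]. rewrite HG, <- Hphi in HML.
  assert (HMA : 0 <= M * A) by (apply Rmult_le_pos; lra).
  assert (Hpos0 : 0 < phi2 D t0 - / 2 * t0 * phi1 c D t0 + phi c D t0).
  { unfold phi, phi1, phi2.
    assert (0 <= (t0 - 2) ^ 2 * (t0 + 4)) by (apply Rmult_le_pos; [apply pow2_ge_0|lra]).
    assert (0 < c * c * t0) by (apply Rmult_lt_0_compat; [nra|lra]).
    nra. }
  lra.
Qed.

Theorem proposition4p9 (n : nat) (hn : (2 <= n)%nat) (a : R)
    (ha : 0 <= a < sqrt 2) :
  unstable n (fun x => a < x n) /\
  exists ba, a < ba /\
    forall b, ba < b -> unstable n (fun x => a < x n < b).
Proof.
  set (c := (a + sqrt 2) / 2).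
  assert (Hs2 : sqrt 2 * sqrt 2 = 2) by (apply sqrt_sqrt; lra).
  assert (Hc : 0 < c) by (unfold c; lra).
  assert (Hca : a < c) by (unfold c; lra).
  assert (Hc2 : c * c < 2) by (assert (c < sqrt 2) by (unfold c; lra); nra).
  set (D := 8 / (2 - c * c) + 2).
  assert (H8 : 0 < 8 / (2 - c * c)) by (apply Rdiv_lt_0_compat; lra).
  assert (HcD : c < D) by (unfold D; assert (c < 2) by nra; lra).
  assert (HD : 8 < D * (2 - c * c)) by (unfold D; field_simplify; [|lra]; unfold Rdiv; lra).
  split.
  - apply (key n _ c D hn Hc Hc2 HcD HD). intros x _ Hb. lra.
  - exists D. split; [lra|]. intros b Hb. apply (key n _ c D hn Hc Hc2 HcD HD). intros x _ Hx. lra.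
Qed.
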